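(* If problem (BM$_{\mathbf n}$) has a spurious 2-critical point, then $C$ lies in the set $\underline{\mathcal V}\times\overline{\mathcal V}\times\{0^d\}+\operatorname{image}\mathcal{A}^*\subseteq\mathbb{S}^{\mathbf n}\times\mathbb{R}^d$ (Minkowski sum), where $\underline{\mathcal V}=\bigcup_{j\in[k]:\,p_j\le n_j}\big(\mathbb{S}^{n_1}\times\cdots\times\mathbb{S}^{n_{j-1}}\times\mathbb{S}^{n_j}_{n_j-p_j}\times\mathbb{S}^{n_{j+1}}\times\cdots\times\mathbb{S}^{n_k}\big)\subseteq\mathbb{S}^{n_1}\times\cdots\times\mathbb{S}^{n_k}$ and $\overline{\mathcal V}=\bigcup_{(r_{k+1},\dots,r_\ell)}\big(\mathbb{S}^{n_{k+1}}_{n_{k+1}-r_{k+1}}\times\cdots\times\mathbb{S}^{n_\ell}_{n_\ell-r_\ell}\big)\subseteq\mathbb{S}^{n_{k+1}}\times\cdots\times\mathbb{S}^{n_\ell}$, the last union being over all possible rank tuples, and $\mathbb{S}^{r}_{s}=\{Z\in\mathbb{S}^r:\operatorname{rank}Z\le s\}$.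
   Context: Let $\mathbb{S}^{r}$ denote real symmetric $r\times r$ matrices, $\mathbb{S}^r_+$ the PSD cone, $A\bullet B=\operatorname{trace}(A^TB)$. Let $\mathbf n=(n_1,\dots,n_\ell)$, $d\ge 0$, $1\le k\le \ell$, $\mathbb{S}^{\mathbf n}=\mathbb{S}^{n_1}\times\cdots\times\mathbb{S}^{n_\ell}$, $\mathbb{S}^{\mathbf n}_+=\mathbb{S}^{n_1}_+\times\cdots\times\mathbb{S}^{n_\ell}_+$, with the inner product $\langle\cdot,\cdot\rangle$ on $\mathbb{S}^{\mathbf n}\times\mathbb{R}^d$ being the sum of trace inner products and the dot product. Let $C\in\mathbb{S}^{\mathbf n}\times\mathbb{R}^d$, $b\in\mathbb{R}^m$, and $\mathcal{A}:\mathbb{S}^{\mathbf n}\times\mathbb{R}^d\to\mathbb{R}^m$ linear, written $\mathcal{A}(X_1,\dots,X_\ell,x)=\sum_j\mathcal{A}_j(X_j)+\mathcal{A}_0(x)$ with $\mathcal{A}_j(X_j)=(A_{i,j}\bullet X_j)_{i\in[m]}$, $A_{i,j}\in\mathbb{S}^{n_j}$ (this formula also defines $\mathcal{A}_j$ on nonsymmetric matrices); $\mathcal{A}^*$ is its adjoint. Let $\mathscr{X}=\{X=(X_1,\dots,X_\ell,x)\in\mathbb{S}^{\mathbf n}_+\times\mathbb{R}^d:\mathcal{A}(X)=b\}$, assumed nonempty, with $\min_{X\in\mathscr{X}}\langle C,X\rangle$ attained. For positive integers $p_1,\dots,p_k$, let $Y=(Y_1,\dots,Y_k)$, $Y_j\in\mathbb{R}^{n_j\times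 p_j}$, $q(Y)=(Y_1Y_1^T,\dots,Y_kY_k^T)$, $\overline X=(X_{k+1},\dots,X_\ell)$. Problem (BM$_{\mathbf n}$) is $\min_{Y,\overline X,x}\langle C,(q(Y),\overline X,x)\rangle$ subject to $(q(Y),\overline X,x)\in\mathscr{X}$. For $\lambda\in\mathbb{R}^m$ let $S(\lambda)=C-\mathcal{A}^*(\lambda)$ with components $S_j(\lambda)\in\mathbb{S}^{n_j}$ and $s(\lambda)\in\mathbb{R}^d$. A point $(Y,\overline X,x)$ is 2-critical if $(q(Y),\overline X,x)\in\mathscr{X}$ and there is $\lambda\in\mathbb{R}^m$ with $S_j(\lambda)\in\mathbb{S}^{n_j}_+$ for $j>k$, $\sum_{j>k}S_j(\lambda)\bullet X_j=0$, $s(\lambda)=0$, $S_j(\lambda)Y_j=0$ for $j\in[k]$, and, for each $j\in[k]$, $S_j(\lambda)\bullet U_jU_j^T\ge0$ for all $U_j\in\mathbb{R}^{n_j\times p_j}$ with $\mathcal{A}_j(U_jY_j^T)=0$. It is spurious if it is not a global minimizer of (BM$_{\mathbf n}$). A tuple $(r_{k+1},\dots,r_\ell)$ is a possible rank tuple if some $X\in\mathscr{X}$ has $\operatorname{rank}X_j=r_j$ for all $j>k$. *)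

(* Defs.v *)
From HB Require Import structures.
From mathcomp Require Import all_boot all_order all_algebra.
From mathcomp Require Import reals.
Set Implicit Arguments. Unset Strict Implicit. Unset Printing Implicit Defensive.
Import Order.TTheory GRing.Theory Num.Theory.
Local Open Scope ring_scope.

(* Blocks are indexed by j : 'I_l (paper: j = 1..l, here j = 0..l-1).
   "j in [k]" (paper) is  (j < k)%N  here; "j > k" (paper) is (k <= j)%N here. *)

Definition mdot (R : realType) (r : nat) (A B : 'M[R]_r) : R := \tr (A^T *m B).

Definition symm (R : realType) (r : nat) (A : 'M[R]_r) : Prop := A^T = A.

Definition psd (R : realType) (r : nat) (A : 'M[R]_r) : Prop :=
  symm A /\ forall v : 'cV[R]_r, 0 <= (v^T *m A *m v) 0 0.

Definition low_rank (R : realType) (r s : nat) (Z : 'M[R]_r) : Prop :=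
  symm Z /\ (\rank Z <= s)%N.

(* Data of the SDP:  min <C,X>  s.t.  A(X) = b, X in S^n_+ x R^d. *)
Record SDP (R : realType) := MkSDP {
  nb : nat;                                   (* l : number of PSD blocks *)
  bsz : 'I_nb -> nat;
  dfree : nat;
  ncons : nat;
  Amat : 'I_ncons -> forall j : 'I_nb, 'M[R]_(bsz j);
  Avec : 'I_ncons -> 'rV[R]_dfree;            (* A_0(x)_i = Avec i . x *)
  bvec : 'I_ncons -> R;
  Cmat : forall j : 'I_nb, 'M[R]_(bsz j);
  cvec : 'rV[R]_dfree
}.
Arguments nb {R} s.  Arguments bsz {R} s _.  Arguments dfree {R} s.
Arguments ncons {R} s.  Arguments Amat {R} s _ _.  Arguments Avec {R} s _.
Arguments bvec {R} s _.  Arguments Cmat {R} s _.  Arguments cvec {R} s.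

Section SDPdefs.
Variables (R : realType) (P : SDP R).

Definition vdot (u v : 'rV[R]_(dfree P)) : R := (u *m v^T) 0 0.

Definition SDP_wf : Prop :=
  (forall i j, symm (Amat P i j)) /\ (forall j, symm (Cmat P j)).

Definition Aop (X : forall j : 'I_(nb P), 'M[R]_(bsz P j)) (x : 'rV[R]_(dfree P))
  (i : 'I_(ncons P)) : R :=
  \sum_(j < nb P) mdot (Amat P i j) (X j) + vdot (Avec P i) x.

Definition feasible (X : forall j : 'I_(nb P), 'M[R]_(bsz P j)) (x : 'rV[R]_(dfree P))
  : Prop :=
  (forall j, psd (X j)) /\ forall i, Aop X x i = bvec P i.

Definition obj (X : forall j : 'I_(nb P), 'M[R]_(bsz P j)) (x : 'rV[R]_(dfree P)) : R :=
  \sum_(j < nb P) mdot (Cmat P j) (X j) + vdot (cvec P) x.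

Definition sdp_min_attained : Prop :=
  exists X x, feasible X x /\ forall X' x', feasible X' x' -> obj X x <= obj X' x'.

Definition Sblk (lam : 'I_(ncons P) -> R) (j : 'I_(nb P)) : 'M[R]_(bsz P j) :=
  Cmat P j - \sum_(i < ncons P) lam i *: Amat P i j.
Definition svec (lam : 'I_(ncons P) -> R) : 'rV[R]_(dfree P) :=
  cvec P - \sum_(i < ncons P) lam i *: Avec P i.

Definition Ablk (j : 'I_(nb P)) (M : 'M[R]_(bsz P j)) (i : 'I_(ncons P)) : R :=
  mdot (Amat P i j) M.

Variables (k : nat) (p : 'I_(nb P) -> nat).

(* Burer-Monteiro variables: Y_j in R^{n_j x p_j} (used for j < k),
   Xbar_j (used for j >= k), x.  The associated point (q(Y), Xbar, x). *)
Definition BMpoint (Y : forall j : 'I_(nb P), 'M[R]_(bsz P j, p j))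
  (Xb : forall j : 'I_(nb P), 'M[R]_(bsz P j)) : forall j : 'I_(nb P), 'M[R]_(bsz P j) :=
  fun j => if (j < k)%N then Y j *m (Y j)^T else Xb j.

Definition BM_feasible Y Xb x : Prop := feasible (BMpoint Y Xb) x.

Definition BM_global_min Y Xb x : Prop :=
  BM_feasible Y Xb x /\
  forall Y' Xb' x', BM_feasible Y' Xb' x' ->
    obj (BMpoint Y Xb) x <= obj (BMpoint Y' Xb') x'.

Definition two_critical Y Xb x : Prop :=
  BM_feasible Y Xb x /\
  exists lam : 'I_(ncons P) -> R,
    [/\ forall j : 'I_(nb P), (k <= j)%N -> psd (Sblk lam j),
        \sum_(j < nb P | (k <= j)%N) mdot (Sblk lam j) (Xb j) = 0,
        svec lam = 0,
        forall j : 'I_(nb P), (j < k)%N -> Sblk lam j *m Y j = 0 &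
        forall j : 'I_(nb P), (j < k)%N ->
          forall U : 'M[R]_(bsz P j, p j),
            (forall i, Ablk (U *m (Y j)^T) i = 0) ->
            0 <= mdot (Sblk lam j) (U *m U^T)].

Definition spurious Y Xb x : Prop := ~ BM_global_min Y Xb x.

(* (r_{k+1},...,r_l) is a possible rank tuple (only entries j >= k matter) *)
Definition possible_rank_tuple (r : 'I_(nb P) -> nat) : Prop :=
  exists X x, feasible X x /\ forall j : 'I_(nb P), (k <= j)%N -> \rank (X j) = r j.

Definition in_Vunder (Z : forall j : 'I_(nb P), 'M[R]_(bsz P j)) : Prop :=
  (forall j : 'I_(nb P), (j < k)%N -> symm (Z j)) /\
  exists j : 'I_(nb P), [/\ (j < k)%N, (p j <= bsz P j)%N &
                           low_rank (bsz P j - p j) (Z j)].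

Definition in_Vover (Z : forall j : 'I_(nb P), 'M[R]_(bsz P j)) : Prop :=
  exists r, possible_rank_tuple r /\
    forall j : 'I_(nb P), (k <= j)%N -> low_rank (bsz P j - r j) (Z j).

Definition C_in_bad_set : Prop :=
  exists (Z : forall j : 'I_(nb P), 'M[R]_(bsz P j)) (z : 'rV[R]_(dfree P))
         (lam : 'I_(ncons P) -> R),
    [/\ in_Vunder Z, in_Vover Z, z = 0,
        forall j, Cmat P j = Z j + \sum_(i < ncons P) lam i *: Amat P i j &
        cvec P = z + \sum_(i < ncons P) lam i *: Avec P i].

End SDPdefs.

(* Main.v *)
Require Import Defs.
From HB Require Import structures.
From mathcomp Require Import all_boot all_order all_algebra.
From mathcomp Require Import reals.
From mathcomp Require Import ring lra.
From Stdlib Require Import Classical.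
From mathcomp Require Import zify.
Set Implicit Arguments. Unset Strict Implicit. Unset Printing Implicit Defensive.
Import Order.TTheory GRing.Theory Num.Theory.
Local Open Scope ring_scope.

Definition qf (R : realType) n (A : 'M[R]_n) (v : 'cV[R]_n) : R := (v^T *m A *m v) 0 0.

Lemma qf_expand (R : realType) n (A : 'M[R]_n) v w t : symm A ->
  qf A (v + t *: w) = qf A v + 2 * t * (w^T *m A *m v) 0 0 + t ^+ 2 * qf A w.
Proof.
move=> sA; rewrite /qf.
have cr : (v^T *m A *m w) 0 0 = (w^T *m A *m v) 0 0.
  have -> : v^T *m A *m w = (w^T *m A *m v)^T.
    by rewrite !trmx_mul trmxK sA mulmxA.
  by rewrite mxE.
rewrite [(_ + _)^T]linearD /= [(_ *: _)^T]linearZ /= !mulmxDl !mulmxDr -!scalemxAl -!scalemxAr !mxE.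
move: cr; rewrite !mxE => ->; ring.
Qed.

Lemma quad_nonneg (R : realType) (a b c : R) :
  (forall t, 0 <= a + 2 * t * b + t ^+ 2 * c) -> 0 <= c -> b ^+ 2 <= a * c.
Proof.
move=> H; rewrite le0r => /orP[/eqP c0|c0].
  subst c; rewrite mulr0.
  case: (eqVneq b 0) => [->|b0]; first by rewrite expr0n.
  have := H (- (a + 1) / (2 * b)).
  rewrite mulr0 addr0.
  have -> : 2 * (- (a + 1) / (2 * b)) * b = - (a + 1).
    by field.
  move=> h; lra.
have := H (- b / c).
have -> : a + 2 * (- b / c) * b + (- b / c) ^+ 2 * c = a - b ^+ 2 / c.
  by field; rewrite gt_eqF.
rewrite subr_ge0 ler_pdivrMr //.
Qed.

Lemma psd_cs (R : realType) n (X : 'M[R]_n) v w : psd X ->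
  ((w^T *m X *m v) 0 0) ^+ 2 <= qf X v * qf X w.
Proof.
move=> [sX pX]; apply: quad_nonneg; last exact: pX.
by move=> t; rewrite -qf_expand //; apply: pX.
Qed.

Lemma ee_entry (R : realType) n (X : 'M[R]_n) i j :
  ((('e_j : 'rV[R]_n)^T)^T *m X *m ('e_i : 'rV[R]_n)^T) 0 0 = X j i.
Proof.
rewrite trmxK -rowE mxE (bigD1 i) //= big1 ?addr0.
  by rewrite !mxE eqxx /= eqxx mulr1.
by move=> k kn; rewrite !mxE eqxx /= (negbTE kn) mulr0.
Qed.

Lemma psd_entry (R : realType) n (X : 'M[R]_n) i j : psd X ->
  X j i ^+ 2 <= X i i * X j j.
Proof.
move=> pX; have := psd_cs ((('e_i : 'rV[R]_n))^T) ((('e_j : 'rV[R]_n))^T) pX.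
by rewrite /qf !ee_entry.
Qed.

Lemma psd_ker (R : realType) n (X : 'M[R]_n) v : psd X -> qf X v = 0 -> X *m v = 0.
Proof.
move=> pX q0; apply/colP => i; rewrite [RHS]mxE.
have := psd_cs v ((('e_i : 'rV[R]_n))^T) pX.
rewrite q0 mul0r trmxK -mulmxA -rowE mxE => h.
by apply/eqP; rewrite -sqrf_eq0 eq_le h sqr_ge0.
Qed.

Lemma psd_diag_ge0 (R : realType) n (X : 'M[R]_n) i : psd X -> 0 <= X i i.
Proof. by move=> [_ pX]; have := pX (('e_i : 'rV[R]_n)^T); rewrite -ee_entry. Qed.

Lemma psd_zero_diag (R : realType) n (X : 'M[R]_n) : psd X ->
  (forall i, X i i = 0) -> X = 0.
Proof.
move=> pX d0; apply/matrixP => j i; rewrite mxE.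
have := psd_entry i j pX; rewrite d0 mul0r => h.
by apply/eqP; rewrite -sqrf_eq0 eq_le h sqr_ge0.
Qed.

Lemma psd_step (R : realType) n (X : 'M[R]_n) i : psd X -> X i i != 0 ->
  let c := col i X in let X' := X - (X i i)^-1 *: (c *m c^T) in
  psd X' /\ (#|[set j | X' j j != 0%R]| < #|[set j | X j j != 0%R]|)%N.
Proof.
move=> pX ai c X'.
have a0 : 0 < X i i by rewrite lt_def ai psd_diag_ge0.
have X'e : forall j, X' j j = X j j - (X i i)^-1 * X j i ^+ 2.
  by move=> j; rewrite !mxE big_ord1 !mxE expr2.
split.
  split.
    rewrite /symm /X' linearB /= linearZ /= trmx_mul trmxK.
    by case: pX => -> _.
  move=> v; rewrite /X' mulmxBr mulmxBl -scalemxAr -scalemxAl.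
  have e : v^T *m (c *m c^T) *m v = (c^T *m v)^T *m (c^T *m v).
    by rewrite trmx_mul trmxK !mulmxA.
  have ec : c^T *m v = ((('e_i : 'rV[R]_n)^T)^T *m X *m v).
    by rewrite trmxK /c tr_col -rowE; case: pX => -> _.
  rewrite e ec; set b := (_ *m X *m v).
  have eb : (b^T *m b) 0 0 = b 0 0 ^+ 2 by rewrite mxE big_ord1 mxE expr2.
  have := psd_cs v ((('e_i : 'rV[R]_n))^T) pX.
  rewrite {2}/qf ee_entry -/(qf X v) -/b /qf => h.
  set Q := b^T *m b in eb *; set P := v^T *m X *m v in h *.
  clearbody Q P.
  rewrite !mxE eb.
  rewrite subr_ge0 ler_pdivrMl //.
  by rewrite mulrC.
apply: proper_card; apply/properP; split.
  apply/subsetP => j; rewrite !inE; apply: contraNN => /eqP xj.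
  rewrite X'e xj; have := psd_entry i j pX; rewrite xj mulr0 => h.
  have -> : X j i = 0 by apply/eqP; rewrite -sqrf_eq0 eq_le h sqr_ge0.
  by rewrite expr0n /= mulr0 subrr.
exists i; first by rewrite inE.
rewrite inE X'e negbK expr2 mulrA mulVf // mul1r subrr //.
Qed.

Lemma psd_decomp (R : realType) n (X : 'M[R]_n) : psd X ->
  exists s : seq 'cV[R]_n, X = \sum_(v <- s) v *m v^T.
Proof.
move: {2}#|[set j | X j j != 0]| (leqnn #|[set j | X j j != 0]|) => N.
elim: N X => [|N IH] X hN pX.
  exists [::]; rewrite big_nil; apply: psd_zero_diag => // i.
  apply/eqP; apply: contraTT hN => h; rewrite -ltnNge card_gt0.
  by apply/set0Pn; exists i; rewrite inE.
case: (pickP [pred i | X i i != 0]) => [i /= ai|none]; last first.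
  exists [::]; rewrite big_nil; apply: psd_zero_diag => // i.
  by apply/eqP; move: (none i) => /= /negbFE.
have [pX' lt] := psd_step pX ai.
set c := col i X in pX' lt *; set X' := X - _ in pX' lt.
have [s Hs] := IH X' (leq_trans (leq_trans lt hN) (leqnn _) : _ <= N.+1)%N pX'.
have ai0 : 0 <= (X i i)^-1 by rewrite invr_ge0 psd_diag_ge0.
exists ((Num.sqrt (X i i)^-1 *: c) :: s); rewrite big_cons -Hs /X'.
rewrite linearZ /= -scalemxAl -scalemxAr scalerA -expr2 sqr_sqrtr //.
by rewrite addrC subrK.
Qed.

Lemma tr_rank1 (R : realType) n (T : 'M[R]_n) v :
  \tr (T *m (v *m v^T)) = qf T v.
Proof.
by rewrite mulmxA mxtrace_mulC /qf /mxtrace big_ord1 mulmxA.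
Qed.

Lemma tr_psd (R : realType) n (T X : 'M[R]_n) : psd T -> psd X ->
  0 <= \tr (T *m X) /\ (\tr (T *m X) = 0 -> T *m X = 0).
Proof.
move=> pT pX; have [s ->] := psd_decomp pX.
rewrite mulmx_sumr raddf_sum /=.
have ge : forall v : 'cV[R]_n, true -> 0 <= \tr (T *m (v *m v^T)).
  by move=> v _; rewrite tr_rank1; case: pT => _; apply.
split; first exact: sumr_ge0.
move=> /eqP; rewrite psumr_eq0 // => /allP h.
rewrite big_seq big1 // => v vs; have := h v vs; rewrite /= => /eqP.
rewrite tr_rank1 => /(psd_ker pT).
by rewrite mulmxA => ->; rewrite mul0mx.
Qed.

Lemma mdot_sym (R : realType) n (S X : 'M[R]_n) : symm S -> mdot S X = \tr (S *m X).
Proof. by rewrite /mdot => ->. Qed.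

Lemma mdotD (R : realType) n (A B X : 'M[R]_n) : mdot (A + B) X = mdot A X + mdot B X.
Proof. by rewrite /mdot linearD /= mulmxDl mxtraceD. Qed.

Lemma mdot_lin (R : realType) n (I : finType) (lam : I -> R) (A : I -> 'M[R]_n) X :
  mdot (\sum_i lam i *: A i) X = \sum_i lam i * mdot (A i) X.
Proof.
rewrite /mdot raddf_sum /= mulmx_suml raddf_sum /=; apply: eq_bigr => i _.
by rewrite linearZ /= -scalemxAl mxtraceZ.
Qed.

Lemma vdot_lin (R : realType) (P : SDP R) (I : finType) (lam : I -> R) a x :
  vdot (\sum_(i : I) lam i *: a i) x = \sum_i lam i * vdot (P:=P) (a i) x.
Proof.
rewrite /vdot mulmx_suml summxE; apply: eq_bigr => i _.
by rewrite -scalemxAl mxE.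
Qed.

Lemma obj_eq (R : realType) (P : SDP R) (lam : 'I_(Defs.ncons P) -> R) (X : forall j : 'I_(nb P), 'M[R]_(bsz P j)) (x : 'rV[R]_(dfree P)) : svec lam = 0 ->
  (forall i, Aop X x i = bvec P i) ->
  obj X x = \sum_j mdot (Sblk lam j) (X j) + \sum_i lam i * bvec P i.
Proof.
move=> hs hA.
have hc : cvec P = \sum_i lam i *: Avec P i by apply: subr0_eq.
have hC : forall j, Cmat P j = Sblk lam j + \sum_i lam i *: Amat P i j.
  by move=> j; rewrite /Sblk subrK.
rewrite /obj hc vdot_lin.
under eq_bigr do rewrite hC mdotD mdot_lin.
rewrite big_split /= -addrA; congr (_ + _).
under [in RHS]eq_bigr do rewrite -hA /Aop mulrDr mulr_sumr.
rewrite big_split /= exchange_big /=.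
done.
Qed.

Theorem theorem12 (R : realType) (P : SDP R) (k : nat) (p : 'I_(nb P) -> nat) :
  SDP_wf P ->
  (1 <= k <= nb P)%N ->
  (forall j : 'I_(nb P), (j < k)%N -> (0 < p j)%N) ->
  sdp_min_attained P ->
  (exists (Y : forall j : 'I_(nb P), 'M[R]_(bsz P j, p j))
          (Xb : forall j : 'I_(nb P), 'M[R]_(bsz P j)) (x : 'rV[R]_(dfree P)),
      two_critical k Y Xb x /\ spurious k Y Xb x) ->
  C_in_bad_set k p.
Proof.
move=> [wfA wfC] _ _ _ [Y [Xb [x [[feas [lam [Hpsd Hsum Hsv HSY H2]]] spur]]]].
have symS : forall j, symm (Sblk lam j).
  move=> j; rewrite /symm /Sblk linearB /= raddf_sum /= (wfC j).
  by congr (_ - _); apply: eq_bigr => i _; rewrite linearZ /= (wfA i j).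
have [fpsd fA] := feas.
have ge0 : forall j : 'I_(nb P), (k <= j)%N -> 0 <= mdot (Sblk lam j) (Xb j).
  move=> j kj; rewrite mdot_sym //; have := fpsd j.
  rewrite /BMpoint ltnNge kj /= => pX; exact: (tr_psd (Hpsd j kj) pX).1.
have SX0 : forall j : 'I_(nb P), (k <= j)%N -> Sblk lam j *m Xb j = 0.
  move=> j kj; have e0 := psumr_eq0P ge0 Hsum kj.
  have := fpsd j; rewrite /BMpoint ltnNge kj /= => pX.
  by apply: (tr_psd (Hpsd j kj) pX).2; rewrite -mdot_sym.
have [j0 [j0k nps]] : exists j0 : 'I_(nb P), (j0 < k)%N /\ ~ psd (Sblk lam j0).
  apply: NNPP => hn; apply: spur; split; first exact: feas.
  have allpsd : forall j, psd (Sblk lam j).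
    move=> j; case: (ltnP j k) => jk; last exact: Hpsd.
    by apply: NNPP => h; apply: hn; exists j; split.
  move=> Y' Xb' x' [fpsd' fA'].
  rewrite (obj_eq Hsv fA) (obj_eq Hsv fA') lerD2r.
  have -> : \sum_j mdot (Sblk lam j) (BMpoint k Y Xb j) = 0.
    rewrite (bigID (fun j : 'I_(nb P) => (j < k)%N)) /= big1 ?add0r.
      rewrite -[RHS]Hsum; apply: eq_big => j; first by rewrite -leqNgt.
      by move=> kj; rewrite /BMpoint (negbTE kj).
    by move=> j jk; rewrite /BMpoint jk mdot_sym // mulmxA HSY // mul0mx mxtrace0.
  apply: sumr_ge0 => j _; rewrite mdot_sym //; exact: (tr_psd (allpsd j) (fpsd' j)).1.
have [v hv] : exists v, qf (Sblk lam j0) v < 0.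
  apply: NNPP => hn; apply: nps; split => // v; rewrite leNgt; apply/negP => h.
  by apply: hn; exists v.
have rY : \rank (Y j0) = p j0.
  apply/eqP; rewrite eqn_leq rank_leq_col /= leqNgt; apply/negP => lt.
  set K := kermx (Y j0)^T.
  have K0 : K != 0 by rewrite -mxrank_eq0 mxrank_ker mxrank_tr subn_eq0 -ltnNge.
  have [i0 ri] : exists i0, row i0 K != 0.
    apply: NNPP => hn; move/eqP: K0; apply; apply/row_matrixP => i; rewrite row0.
    by apply/eqP/negPn/negP => h; apply: hn; exists i.
  set w := row i0 K.
  have wY : w *m (Y j0)^T = 0 by apply/eqP; rewrite -sub_kermx row_sub.
  have Ah : forall i, Ablk (v *m w *m (Y j0)^T) i = 0.
    by move=> i; rewrite /Ablk -mulmxA wY mulmx0 /mdot mulmx0 mxtrace0.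
  have := H2 j0 j0k (v *m w) Ah.
  have e : v *m w *m (v *m w)^T = ((w *m w^T) 0 0) *: (v *m v^T).
    set r := (w *m w^T) 0 0.
    rewrite trmx_mul -!mulmxA (mulmxA w) [w *m w^T]mx11_scalar -/r mul_scalar_mx.
    by rewrite linearZ.
  have r0 : 0 < (w *m w^T) 0 0.
    rewrite mxE.
    have ge : forall j, true -> 0 <= w 0 j * w^T j 0.
      by move=> j _; rewrite !mxE -expr2 sqr_ge0.
    rewrite lt_def sumr_ge0 // andbT.
    apply/negP => /eqP h; move/negP: ri; apply.
    apply/eqP/rowP => j; rewrite [RHS]mxE.
    have hj := @psumr_eq0P _ _ _ _ ge h j isT.
    have t : w^T j 0 = w 0 j by rewrite mxE.
    by move: hj; rewrite t -expr2 => /eqP; rewrite sqrf_eq0 => /eqP.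
  rewrite e mdot_sym // linearZ /= mxtraceZ tr_rank1 pmulr_rge0 //.
  by rewrite leNgt hv.
exists (Sblk lam), 0, lam; split => //.
- split; first by move=> j _; exact: symS.
  exists j0; split => //; first by rewrite -rY rank_leq_row.
  split => //; have := mulmx0_rank_max (HSY j0 j0k); rewrite rY => h.
  lia.
- exists (fun j => \rank (BMpoint k Y Xb j)); split.
    by exists (BMpoint k Y Xb), x; split.
  move=> j kj; split => //; rewrite /BMpoint ltnNge kj /=.
  have h := mulmx0_rank_max (SX0 j kj).
  lia.
- by move=> j; rewrite /Sblk subrK.
- by rewrite add0r; apply: subr0_eq.
Qed.
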